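(* Let $(\mathfrak{g},\langle\cdot,\cdot\rangle)$ be a quadratic Lie algebra with $H^2(\mathfrak{g})=\{0\}$ and let $(\mathfrak{h},\theta_1,\dots,\theta_k)$ be a $k$-symplectic structure on $\mathfrak{g}$. Then $\mathfrak{h}$ is degenerate with respect to $\langle\cdot,\cdot\rangle$, i.e. the restriction of $\langle\cdot,\cdot\rangle$ to $\mathfrak{h}$ is degenerate.
   Context: A quadratic Lie algebra is a finite-dimensional real Lie algebra $\mathfrak{g}$ endowed with a nondegenerate symmetric bilinear form $\langle\cdot,\cdot\rangle$ which is invariant: $\langle [u,v],w\rangle+\langle [u,w],v\rangle=0$ for all $u,v,w\in\mathfrak{g}$. $H^2(\mathfrak{g})$ denotes the second Chevalley–Eilenberg cohomology group of $\mathfrak{g}$ with trivial real coefficients. A $k$-symplectic structure on a real Lie algebra $\mathfrak{g}$ of dimension $n(k+1)$ ($n,k\ge1$) is a pair consisting of a Lie subalgebra $\mathfrak{h}\subset\mathfrak{g}$ of dimension $nk$ and a family $(\theta_1,\dots,\theta_k)$ of skew-symmetric bilinear forms on $\mathfrak{g}$ such that: (i) $\bigcap_{i=1}^k\ker\theta_i=\{0\}$, where $\ker\theta_i=\{u\in\mathfrak{g}:\theta_i(u,v)=0\ \forall v\in\mathfrak{g}\}$; (ii) each $\theta_i$ is a 2-cocycle: $\theta_i([u,v],w)+\theta_i([v,w],u)+\theta_i([w,u],v)=0$ for all $u,v,w$; (iii) $\theta_i(u,v)=0$ for all $u,v\in\mathfrak{h}$ and all $i$. *)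

(* Defs.v *)
From HB Require Import structures.
From mathcomp Require Import all_boot all_order all_algebra.
From mathcomp Require Import reals.
Unset Printing Implicit Defensive.
Import Order.TTheory GRing.Theory Num.Theory.
Local Open Scope ring_scope.

Section Defs.
Variables (R : realType) (V : vectType R).

Definition bilinear_form (b : V -> V -> R) : Prop :=
  (forall (a : R) (u u' v : V), b (a *: u + u') v = a * b u v + b u' v) /\
  (forall (a : R) (u v v' : V), b u (a *: v + v') = a * b u v + b u v').

Definition bilinear_map (f : V -> V -> V) : Prop :=
  (forall (a : R) (u u' v : V), f (a *: u + u') v = a *: f u v + f u' v) /\
  (forall (a : R) (u v v' : V), f u (a *: v + v') = a *: f u v + f u v').

Definition skew_form (b : V -> V -> R) : Prop := forall u v, b u v = - b v u.

Definition lie_bracket (br : V -> V -> V) : Prop :=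
  [/\ bilinear_map br,
      (forall u, br u u = 0) &
      (forall u v w, br u (br v w) + br v (br w u) + br w (br u v) = 0)].

Definition quadratic_form (br : V -> V -> V) (B : V -> V -> R) : Prop :=
  [/\ bilinear_form B,
      (forall u v, B u v = B v u),
      (forall u, (forall v, B u v = 0) -> u = 0) &
      (forall u v w, B (br u v) w + B (br u w) v = 0)].

Definition cocycle2 (br : V -> V -> V) (th : V -> V -> R) : Prop :=
  [/\ bilinear_form th, skew_form th &
      (forall u v w, th (br u v) w + th (br v w) u + th (br w u) v = 0)].

Definition coboundary2 (br : V -> V -> V) (th : V -> V -> R) : Prop :=
  exists f : V -> R,
    (forall (a : R) (u v : V), f (a *: u + v) = a * f u + f v) /\
    (forall u v, th u v = - f (br u v)).

Definition H2_trivial (br : V -> V -> V) : Prop :=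
  forall th, cocycle2 br th -> coboundary2 br th.

Definition k_symplectic (br : V -> V -> V) (n k : nat) (h : {vspace V})
    (theta : 'I_k -> V -> V -> R) : Prop :=
  [/\ (0 < n)%N /\ (0 < k)%N,
      \dim (fullv : {vspace V}) = (n * k.+1)%N /\ \dim h = (n * k)%N,
      (forall u v, u \in h -> v \in h -> br u v \in h),
      (forall u, (forall i v, theta i u v = 0) -> u = 0) &
      (forall i, cocycle2 br (theta i)) /\
      (forall i u v, u \in h -> v \in h -> theta i u v = 0)].

End Defs.
Arguments bilinear_form {R V}.
Arguments bilinear_map {R V}.
Arguments skew_form {R V}.
Arguments lie_bracket {R V}.
Arguments quadratic_form {R V}.
Arguments cocycle2 {R V}.
Arguments coboundary2 {R V}.
Arguments H2_trivial {R V}.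
Arguments k_symplectic {R V}.

(* Main.v *)
Require Import Defs.
From HB Require Import structures.
From mathcomp Require Import all_boot all_order all_algebra.
From mathcomp Require Import reals.
From mathcomp Require Import zify.
From Stdlib Require Import Classical IndefiniteDescription.
Import GRing.Theory.
Local Open Scope ring_scope.

Lemma size_index_enum_ord k : size (index_enum 'I_k) = k.
Proof. by rewrite -[index_enum _]filter_predT deprecated_filter_index_enum -cardE card_ord. Qed.

Lemma cap_count (R : fieldType) (V : vectType R) (h : {vspace V}) (I : Type) (r : seq I) (K : I -> {vspace V}) :
  (\sum_(i <- r) \dim (h :&: K i) + \dim h <= size r * \dim h + \dim (h :&: \bigcap_(i <- r) K i))%N.
Proof.
elim: r => [|i r IH]; first by rewrite big_nil big_nil capvf /=.
rewrite !big_cons /=.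
have := dimv_sum_cap (h :&: K i) (h :&: \bigcap_(j <- r) K j).
have le1 : (\dim (h :&: K i + h :&: \bigcap_(j <- r) K j) <= \dim h)%N.
  by apply: dimvS; rewrite subv_add !capvSl.
have le2 : (\dim ((h :&: K i) :&: (h :&: \bigcap_(j <- r) K j)) <= \dim (h :&: (K i :&: \bigcap_(j <- r) K j)))%N.
  apply: dimvS; apply/subvP => x; rewrite !memv_cap => /andP[/andP[-> ->] /andP[_ ->]] //.
rewrite mulSn. lia.
Qed.

Lemma riesz (R : realType) (V : vectType R) (B : V->V->R) :
  bilinear_form B -> (forall u, (forall v, B u v = 0) -> u = 0) ->
  forall f : V -> R, (forall a u v, f (a *: u + v) = a * f u + f v) ->
  exists a, forall x, B a x = f x.
Proof.
move=> [B1 B2] Bnd f flin.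
have linB a : linear_for (@GRing.scale R R^o) (B a : V -> R^o).
  by move=> c u v; rewrite B2.
pose BL a : {linear V -> R^o} := HB.pack_for {linear V -> R^o} (B a : V -> R^o)
   (GRing.isLinear.Build R V R^o _ (B a : V -> R^o) (linB a)).
pose phi a : 'Hom(V, R^o) := linfun (BL a).
have linphi : linear_for (@GRing.scale R _) phi.
  move=> c u v; apply/lfunP => x; rewrite !lfunE /= scale_lfunE /phi !lfunE /=.
  by rewrite B1.
pose PL : {linear V -> 'Hom(V, R^o)} := HB.pack_for {linear V -> 'Hom(V, R^o)} phi
   (GRing.isLinear.Build R V _ _ phi linphi).
have linf : linear_for (@GRing.scale R R^o) (f : V -> R^o).
  by move=> c u v; rewrite flin.
pose FL : {linear V -> R^o} := HB.pack_for {linear V -> R^o} (f : V -> R^o)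
   (GRing.isLinear.Build R V R^o _ (f : V -> R^o) linf).
have ker0 : (fullv :&: lker (linfun PL) = 0)%VS.
  apply/eqP; rewrite capfv; apply/lker0P => x y.
  rewrite !lfunE /= => exy.
  apply/eqP; rewrite -subr_eq0; apply/eqP; apply: Bnd => v.
  have := congr1 (fun g : 'Hom(V, R^o) => g v) exy; rewrite /phi !lfunE /=.
  move=> e. rewrite -[x - y]addrC -scaleN1r B1 e.
  by rewrite mulN1r addNr.
have dimI := limg_dim_eq ker0.
have full : (linfun PL @: fullv)%VS = fullv.
  apply/eqP; rewrite eqEdim subvf dimI !dimvf /dim /= muln1 //.
have : linfun FL \in (linfun PL @: fullv)%VS by rewrite full memvf.
case/memv_imgP => a _ ea; exists a => x.
have := congr1 (fun g : 'Hom(V, R^o) => g x) ea; rewrite !lfunE /=.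
by move=> ->.
Qed.

Section Helpers.
Variables (R : realType) (V : vectType R).

Lemma bm_facts (br : V -> V -> V) : bilinear_map br ->
  [/\ forall u v w, br (u + v) w = br u w + br v w,
      forall u v w, br u (v + w) = br u v + br u w,
      forall u, br 0 u = 0, forall u, br u 0 = 0 &
      (forall c u v, br (c *: u) v = c *: br u v) /\ (forall c u v, br u (c *: v) = c *: br u v)].
Proof.
move=> [L1 L2].
have A1 u v w : br (u + v) w = br u w + br v w by have := L1 1 u v w; rewrite !scale1r.
have A2 u v w : br u (v + w) = br u v + br u w by have := L2 1 u v w; rewrite !scale1r.
have Z1 u : br 0 u = 0.
  by apply: (addrI (br 0 u)); rewrite addr0 -A1 addr0.
have Z2 u : br u 0 = 0.
  by apply: (addrI (br u 0)); rewrite addr0 -A2 addr0.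
split => //; split => c u v.
  by rewrite -[c *: u]addr0 L1 Z1 addr0.
by rewrite -[c *: v]addr0 L2 Z2 addr0.
Qed.

Lemma bf_facts (B : V -> V -> R) : bilinear_form B ->
  [/\ forall u v w, B (u + v) w = B u w + B v w,
      forall u v w, B u (v + w) = B u v + B u w,
      forall u, B 0 u = 0, forall u, B u 0 = 0 &
      (forall u v, B (- u) v = - B u v) /\ (forall u v, B u (- v) = - B u v)].
Proof.
move=> [L1 L2].
have A1 u v w : B (u + v) w = B u w + B v w by have := L1 1 u v w; rewrite scale1r !mul1r.
have A2 u v w : B u (v + w) = B u v + B u w by have := L2 1 u v w; rewrite scale1r !mul1r.
have Z1 u : B 0 u = 0.
  by apply: (addrI (B 0 u)); rewrite addr0 -A1 addr0.
have Z2 u : B u 0 = 0.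
  by apply: (addrI (B u 0)); rewrite addr0 -A2 addr0.
split => //; split => u v.
  by rewrite -scaleN1r -[_ *: u]addr0 L1 Z1 addr0 mulN1r.
by rewrite -scaleN1r -[_ *: v]addr0 L2 Z2 addr0 mulN1r.
Qed.

End Helpers.

Theorem mainTheorem5 (R : realType) (V : vectType R)
    (br : V -> V -> V) (B : V -> V -> R)
    (n k : nat) (h : {vspace V}) (theta : 'I_k -> V -> V -> R) :
  lie_bracket br ->
  quadratic_form br B ->
  H2_trivial br ->
  k_symplectic br n k h theta ->
  exists2 u : V, (u \in h) /\ (u != 0) & (forall v, v \in h -> B u v = 0).
Proof.
move=> [brL brAlt brJac] [Bbil Bsym Bnd Binv] H2
  [[n0 k0] [dimV dimh] hsub thnd [thcoc th0]].
apply: NNPP => Hneg.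
have hnd u : u \in h -> (forall v, v \in h -> B u v = 0) -> u = 0.
  move=> hu Hu; apply: NNPP => nu; apply: Hneg; exists u => //; split => //; exact/eqP.
have [brD1 brD2 br01 br02 [brZ1 brZ2]] := @bm_facts _ _ _ brL.
have [BD1 BD2 B01 B02 [BN1 BN2]] := @bf_facts _ _ _ Bbil.
have brN u v : br u v = - br v u.
  apply/eqP; rewrite -subr_eq0 opprK; apply/eqP.
  have := brAlt (u + v); rewrite brD1 !brD2 brAlt brAlt add0r addr0 => ->.
  by [].
have exa i : exists a : V, forall u v, theta i u v = - B (br a u) v.
  have [f [flin fE]] := H2 _ (thcoc i).
  have [a Ha] := @riesz _ _ _ Bbil Bnd _ flin.
  exists a => u v; rewrite fE -Ha Bsym.
  congr (- _).
  have e := Binv u v a.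
  rewrite [br u a]brN BN1 in e.
  by apply/eqP; rewrite -subr_eq0 e.
pose a i := proj1_sig (constructive_indefinite_description _ (exa i)).
have aE i u v : theta i u v = - B (br (a i) u) v :=
  proj2_sig (constructive_indefinite_description _ (exa i)) u v.
have linad i : linear_for (@GRing.scale R V) (br (a i)).
  by move=> c u v; rewrite brL.2.
pose AD i : {linear V -> V} := HB.pack_for {linear V -> V} (br (a i))
  (GRing.isLinear.Build R V V _ (br (a i)) (linad i)).
pose ad i : 'End(V) := linfun (AD i).
have adE i x : ad i x = br (a i) x by rewrite lfunE.
pose U i := (ad i @: h)%VS.
have Uperp i w v : w \in U i -> v \in h -> B w v = 0.
  move=> /memv_imgP [x hx ->] hv; rewrite adE.
  have := aE i x v; rewrite th0 // => e.
  by apply/eqP; rewrite -oppr_eq0 -e.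
have Ucap i : (U i :&: h = 0)%VS.
  apply/eqP; rewrite -subv0; apply/subvP => x; rewrite memv_cap memv0 => /andP[xU xh].
  by apply/eqP; apply: hnd xh _ => v hv; exact: Uperp xU hv.
have dimK i : (\dim (h :&: lker (ad i)) + \dim (U i) = n * k)%N.
  by rewrite limg_ker_dim dimh.
have Ule i : (\dim (U i) <= n)%N.
  have := dimv_sum_cap (U i) h; rewrite Ucap dimv0 addn0 dimh.
  have := dimvS (subvf (U i + h)); rewrite dimV mulnS. lia.
have cap0 : \dim (h :&: \bigcap_(i <- index_enum 'I_k) lker (ad i)) = 0%N.
  apply/eqP; rewrite dimv_eq0 -subv0; apply/subvP => x; rewrite memv_cap memv0.
  move=> /andP[xh]; rewrite memvE => /subv_bigcapP Hx.
  apply/eqP/thnd => i v.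
  rewrite aE; have := Hx i isT; rewrite -memvE memv_ker adE => /eqP ->.
  by rewrite B01 oppr0.
have count := @cap_count _ _ h _ (index_enum 'I_k) (fun i => lker (ad i)).
rewrite size_index_enum_ord cap0 addn0 dimh /= in count.
have Uge j : (n <= \dim (U j))%N.
  pose d i := \dim (h :&: lker (ad i)).
  pose m0 := (n * k - n)%N.
  have dge i : (m0 <= d i)%N by have := dimK i; have := Ule i; rewrite /d /m0; lia.
  have cst : (\sum_(i < k) m0 = k * m0)%N by rewrite big_const_ord iter_addn_0 mulnC.
  have spl : (\sum_(i < k) d i = \sum_(i < k) (d i - m0) + k * m0)%N.
    by rewrite -cst -big_split /=; apply: eq_bigr => i _; rewrite subnK.
  have e1 : (k * m0 + n * k = k * (n * k))%N.
    rewrite /m0 mulnBr (mulnC k n).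
    have : (n * k <= k * (n * k))%N by rewrite leq_pmull.
    lia.
  have s0 : (\sum_(i < k) (d i - m0) = 0)%N.
    have c' : (\sum_(i < k) d i + n * k <= k * (n * k))%N := count.
    rewrite spl -e1 in c'. lia.
  move: s0; rewrite (bigD1 j) //= => s0.
  have := dimK j; have := dge j; rewrite /d /m0 in s0 *.
  have : (n <= n * k)%N by rewrite leq_pmulr.
  lia.
have full j : (U j + h)%VS = fullv.
  apply/eqP; rewrite eqEdim subvf /=.
  have := dimv_sum_cap (U j) h; rewrite Ucap dimv0 addn0 dimh dimV mulnS => ->.
  have := Uge j; lia.
have ah j : a j \in h.
  have : a j \in (U j + h)%VS by rewrite full memvf.
  case/memv_addP => w wU [u uh aeq].
  suff w0 : w = 0 by rewrite aeq w0 add0r.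
  apply: Bnd => y.
  have : y \in (U j + h)%VS by rewrite full memvf.
  case/memv_addP => w' w'U [u' u'h ->].
  rewrite BD2 (Uperp j w u') // addr0.
  case/memv_imgP: w'U => x xh ->.
  rewrite adE Bsym.
  have e1 : br (a j) w = - br (a j) u.
    by apply/eqP; rewrite -addr_eq0 -brD2 -aeq brAlt.
  have e2 : B (br (a j) u) x = 0.
    by apply: (Uperp j) => //; rewrite -adE; apply: memv_img.
  by move: (Binv (a j) x w); rewrite e1 BN1 e2 oppr0 addr0.
have hn0 : h != 0%VS by rewrite -dimv_eq0 dimh muln_eq0 negb_or -!lt0n n0 k0.
have xh : vpick h \in h := memv_pick h.
have xn0 : vpick h != 0 by rewrite vpick0.
apply/(negP xn0)/eqP/thnd => i v.
rewrite aE.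
have : br (a i) (vpick h) \in (U i :&: h)%VS.
  by rewrite memv_cap hsub ?ah // andbT -adE memv_img.
rewrite Ucap memv0 => /eqP ->.
by rewrite B01 oppr0.
Qed.
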